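(* For every $N\ge3$ and every choice of settings $X_j,X_j'$ ($j=1,\dots,N$), $|\langle I^N_{CHSH}\rangle|\le 2\sqrt2$. Moreover, if the settings satisfy (ND) and $\langle I^N_{CHSH}\rangle=\pm2\sqrt2$, then $\langle I^2_{CHSH}\rangle=\langle I^N_{CHSH}\rangle$.
   Context: $|G\rangle=\frac{1}{\sqrt2}(|0\cdots0\rangle+|1\cdots1\rangle)$ ($N$ qubits), $|\psi_+\rangle=\frac1{\sqrt2}(|00\rangle+|11\rangle)$, $\vec\sigma=(\sigma_x,\sigma_y,\sigma_z)$ Pauli matrices. For $j=1,\dots,N$: $X_j=\vec n_j\cdot\vec\sigma$, $X_j'=\vec n_j'\cdot\vec\sigma$ with $\vec n_j=(\sin\alpha_j\cos\varphi_j,\sin\alpha_j\sin\varphi_j,\cos\alpha_j)$, $\vec n_j'=(\sin\alpha_j'\cos\varphi_j',\sin\alpha_j'\sin\varphi_j',\cos\alpha_j')$, $\alpha_j,\alpha_j'\in[0,\pi]$. $\mathbb A_0=\bigotimes_{j=1}^{N-1}X_j$, $\mathbb A_1=\bigotimes_{j=1}^{N-1}X_j'$, $\mathbb B_0=X_N$, $\mathbb B_1=X_N'$, and $\langle I^N_{CHSH}\rangle=\sum_{a,b\in\{0,1\}}(-1)^{ab}\langle G|\mathbb A_a\otimes\mathbb B_b|G\rangle$. (ND): $D:=(\prod_{j=1}^{N-1}\cos\alpha_j)^2+(\prod_{j=1}^{N-1}\sin\alpha_j)^2\neq0$, $D':=(\prod_{j=1}^{N-1}\cos\alpha_j')^2+(\prod_{j=1}^{N-1}\sin\alpha_j')^2\neq0$,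 and if $N$ is odd, $\sin\alpha_N\neq0\neq\sin\alpha_N'$. Under (ND): $\varepsilon=D^{-1/2}$, $\varepsilon'=D'^{-1/2}$; $A_0=\vec{\mathrm n}_0\cdot\vec\sigma$, $\vec{\mathrm n}_0=\varepsilon(\prod_{j<N}\sin\alpha_j\cos\beta,\prod_{j<N}\sin\alpha_j\sin\beta,\prod_{j<N}\cos\alpha_j)$, $\beta=\sum_{j=1}^{N-1}\varphi_j$; $A_1$ likewise from primed parameters with $\varepsilon'$. If $N$ even, $B_0=X_N,B_1=X_N'$; if $N$ odd, $B_0=\cos\varphi_N\sigma_x+\sin\varphi_N\sigma_y$, $B_1=\cos\varphi_N'\sigma_x+\sin\varphi_N'\sigma_y$. $\langle I^2_{CHSH}\rangle=\sum_{a,b}(-1)^{ab}\langle\psi_+|A_a\otimes B_b|\psi_+\rangle$. *)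

(* Defs.v *)
From HB Require Import structures.
From mathcomp Require Import all_boot all_order all_algebra.
From mathcomp Require Import reals trigo.
From mathcomp.real_closed Require Import complex mxtens.

Set Implicit Arguments.
Unset Strict Implicit.
Unset Printing Implicit Defensive.

Import Order.TTheory GRing.Theory Num.Theory.
Local Open Scope ring_scope.
Local Open Scope complex_scope.

Section Quantum.
Variable R : realType.
Local Notation C := R[i].

Definition sigma_x : 'M[C]_2 :=
  \matrix_(i < 2, j < 2) (if i != j :> nat then 1 else 0).
Definition sigma_y : 'M[C]_2 :=
  \matrix_(i < 2, j < 2)
    (if (i == 0 :> nat) && (j == 1 :> nat) then - 'i
     else if (i == 1 :> nat) && (j == 0 :> nat) then 'i else 0).
Definition sigma_z : 'M[C]_2 :=
  \matrix_(i < 2, j < 2)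
    (if i == j :> nat then (if i == 0 :> nat then 1 else -1) else 0).

Definition spin (n1 n2 n3 : R) : 'M[C]_2 :=
  n1%:C *: sigma_x + n2%:C *: sigma_y + n3%:C *: sigma_z.

Definition setting (a p : R) : 'M[C]_2 :=
  spin (sin a * cos p) (sin a * sin p) (cos a).

Definition ket0 : 'cV[C]_2 := \col_(i < 2) (if i == 0 :> nat then 1 else 0).
Definition ket1 : 'cV[C]_2 := \col_(i < 2) (if i == 1 :> nat then 1 else 0).

Fixpoint tens_from {m n : nat} (f : nat -> 'M[C]_(m, n)) (i k : nat)
  : 'M[C]_(m ^ k.+1, n ^ k.+1) :=
  if k is k'.+1 then f i *t tens_from f i.+1 k' else f i.

Definition ktens {m n : nat} (u : 'cV[C]_m) (v : 'cV[C]_n) : 'cV[C]_(m * n) :=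
  u *t v.

Fixpoint ktens_from {m : nat} (f : nat -> 'cV[C]_m) (i k : nat)
  : 'cV[C]_(m ^ k.+1) :=
  if k is k'.+1 then ktens (f i) (ktens_from f i.+1 k') else f i.

Definition expect {d : nat} (psi : 'cV[C]_d) (M : 'M[C]_d) : C :=
  ((map_mx Num.conj psi)^T *m M *m psi) 0 0.

(* N-qubit GHZ state (1/sqrt2)(|0...0> + |1...1>), written as
   (|0>^{(x)(N-1)} (x) |0> + |1>^{(x)(N-1)} (x) |1>)/sqrt 2; here N >= 2 *)
Definition ghz (N : nat) : 'cV[C]_(2 ^ (N.-2).+1 * 2) :=
  (Num.sqrt (2 : R))^-1%:C *:
    (ktens (ktens_from (fun _ => ket0) 1 N.-2) ket0
     + ktens (ktens_from (fun _ => ket1) 1 N.-2) ket1).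

Definition psi_plus : 'cV[C]_(2 * 2) :=
  (Num.sqrt (2 : R))^-1%:C *: (ktens ket0 ket0 + ktens ket1 ket1).

Definition I_N_CHSH (N : nat) (alpha phi alpha' phi' : nat -> R) : C :=
  let X j := setting (alpha j) (phi j) in
  let X' j := setting (alpha' j) (phi' j) in
  let A0 := tens_from X 1 N.-2 in
  let A1 := tens_from X' 1 N.-2 in
  let B0 := X N in
  let B1 := X' N in
  expect (ghz N) (A0 *t B0) + expect (ghz N) (A0 *t B1)
  + expect (ghz N) (A1 *t B0) - expect (ghz N) (A1 *t B1).

Definition Dfun (N : nat) (alpha : nat -> R) : R :=
  (\prod_(1 <= j < N) cos (alpha j)) ^+ 2 + (\prod_(1 <= j < N) sin (alpha j)) ^+ 2.

Definition A_eff (N : nat) (alpha phi : nat -> R) : 'M[C]_2 :=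
  let eps := (Num.sqrt (Dfun N alpha))^-1 in
  let beta := \sum_(1 <= j < N) phi j in
  spin (eps * (\prod_(1 <= j < N) sin (alpha j)) * cos beta)
       (eps * (\prod_(1 <= j < N) sin (alpha j)) * sin beta)
       (eps * \prod_(1 <= j < N) cos (alpha j)).

Definition B_eff (N : nat) (alpha phi : nat -> R) : 'M[C]_2 :=
  if odd N then spin (cos (phi N)) (sin (phi N)) 0
  else setting (alpha N) (phi N).

Definition I_2_CHSH (N : nat) (alpha phi alpha' phi' : nat -> R) : C :=
  let A0 := A_eff N alpha phi in
  let A1 := A_eff N alpha' phi' in
  let B0 := B_eff N alpha phi in
  let B1 := B_eff N alpha' phi' in
  expect psi_plus (A0 *t B0) + expect psi_plus (A0 *t B1)
  + expect psi_plus (A1 *t B0) - expect psi_plus (A1 *t B1).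

Definition ND (N : nat) (alpha alpha' : nat -> R) : Prop :=
  Dfun N alpha != 0 /\ Dfun N alpha' != 0 /\
  (odd N -> sin (alpha N) != 0 /\ sin (alpha' N) != 0).

End Quantum.

(* Main.v *)
Require Import Defs.
From HB Require Import structures.
From mathcomp Require Import all_boot all_order all_algebra.
From mathcomp Require Import reals trigo.
From mathcomp.real_closed Require Import complex mxtens.
Import Order.TTheory GRing.Theory Num.Theory.
Local Open Scope ring_scope.
Local Open Scope complex_scope.

Set Implicit Arguments.
Unset Strict Implicit.
Section S.
Variable R : realType.
Local Notation C := R[i].

Definition bf {d : nat} (u : 'cV[C]_d) (M : 'M[C]_d) (v : 'cV[C]_d) : C :=
  ((map_mx Num.conj u)^T *m M *m v) 0 0.

Lemma conj_tens m n p q (A : 'M[C]_(m,n)) (B : 'M[C]_(p,q)) :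
  map_mx Num.conj (A *t B) = map_mx Num.conj A *t map_mx Num.conj B.
Proof. by apply/matrixP=> i j; rewrite !mxE rmorphM. Qed.

Lemma bf_tens m n (u v : 'cV[C]_m) (p q : 'cV[C]_n) (A : 'M[C]_m) (B : 'M[C]_n) :
  bf (u *t p) (A *t B) (v *t q) = bf u A v * bf p B q.
Proof.
rewrite /bf.
change ((((map_mx Num.conj (u *t p))^T : 'M_(1 * 1, m * n)) *m (A *t B) *m (v *t q)) 0 0 = bf u A v * bf p B q).
rewrite conj_tens.
rewrite trmx_tens !tensmx_mul [LHS]mxE /bf.
move: (mxtens_unindex _) => [a b] /=.
by rewrite (ord1 a) (ord1 b).
Qed.

Lemma bfDl d (u u' v : 'cV[C]_d) M : bf (u + u') M v = bf u M v + bf u' M v.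
Proof. by rewrite /bf (map_mxD Num.conj) linearD /= !mulmxDl mxE. Qed.
Lemma bfDr d (u v v' : 'cV[C]_d) M : bf u M (v + v') = bf u M v + bf u M v'.
Proof. by rewrite /bf !mulmxDr mxE. Qed.
Lemma bfZl d (a : C) (u v : 'cV[C]_d) M : bf (a *: u) M v = Num.conj a * bf u M v.
Proof. by rewrite /bf (map_mxZ Num.conj) linearZ /= -!scalemxAl mxE. Qed.
Lemma bfZr d (a : C) (u v : 'cV[C]_d) M : bf u M (a *: v) = a * bf u M v.
Proof. by rewrite /bf -!scalemxAr mxE. Qed.

Lemma bf_tens_from k : forall (f g : nat -> 'cV[C]_2) (X : nat -> 'M[C]_2) i,
  bf (ktens_from f i k) (tens_from X i k) (ktens_from g i k) =
  \prod_(i <= j < i + k.+1) bf (f j) (X j) (g j).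
Proof.
elim: k => [|k IH] f g X i /=.
  by rewrite addn1 big_nat1.
rewrite /ktens bf_tens IH [RHS]big_ltn; last by rewrite addnS ltnS leq_addr.
by rewrite !addSn !addnS.
Qed.

Lemma bf_ketE (M : 'M[C]_2) :
  [/\ bf (ket0 R) M (ket0 R) = M 0 0, bf (ket0 R) M (ket1 R) = M 0 1,
       bf (ket1 R) M (ket0 R) = M 1 0 & bf (ket1 R) M (ket1 R) = M 1 1].
Proof.
rewrite /bf !mxE !big_ord_recl !big_ord0 !mxE /= !big_ord_recl !big_ord0 !mxE /=.
rewrite ?rmorph0 ?rmorph1 !(mul1r, mul0r, mulr1, mulr0, addr0, add0r).
by split; congr (M _ _); apply: val_inj.
Qed.


Lemma e01 : ((0 : 'I_2) == 1 :> nat) = false. Proof. by []. Qed.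
Lemma e10 : ((1 : 'I_2) == 0 :> nat) = false. Proof. by []. Qed.
Lemma nT : ~~ true = false. Proof. by []. Qed.
Lemma nF : ~~ false = true. Proof. by []. Qed.

Lemma cplxE (a b : R) : a +i* b = a%:C + b%:C * 'i.
Proof. by rewrite {1}[a +i* b]complexE mulrC. Qed.

Lemma spinE (a b c : R) :
  [/\ spin a b c 0 0 = c%:C, spin a b c 0 1 = a +i* (- b),
      spin a b c 1 0 = a +i* b & spin a b c 1 1 = (- c)%:C].
Proof.
rewrite /spin !cplxE; split; rewrite !mxE !(eqxx, e01, e10, nT, nF, andbT, andbF, andTb, andFb);
  lazy beta iota; rewrite ?rmorphN !(mulr0, mulr1, add0r, addr0, mulrN, mulNr, mulr1) //.
Qed.

End S.

From HB Require Import structures.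
From mathcomp Require Import all_boot all_order all_algebra.
From mathcomp Require Import reals trigo.
From mathcomp.real_closed Require Import complex mxtens.
From mathcomp Require Import ring lra.
Import Order.TTheory GRing.Theory Num.Theory.
Local Open Scope ring_scope.
Local Open Scope complex_scope.
Set Implicit Arguments.
Unset Strict Implicit.
Section S.
Variable R : realType.
Local Notation C := R[i].
Definition expi (x : R) : C := cos x +i* sin x.
Lemma expiD x y : expi (x + y) = expi x * expi y.
Proof. rewrite /expi cosD sinD; simpc. congr (_ +i* _); ring. Qed.
Lemma expi0 : expi 0 = 1.
Proof. by rewrite /expi cos0 sin0. Qed.

Lemma settingE (a p : R) :
  [/\ setting a p 0 0 = (cos a)%:C, setting a p 0 1 = (sin a)%:C * expi (- p),
      setting a p 1 0 = (sin a)%:C * expi p & setting a p 1 1 = - (cos a)%:C].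
Proof.
rewrite /setting; have [-> -> -> ->] := spinE (sin a * cos p) (sin a * sin p) (cos a).
rewrite /expi cosN sinN !cplxE; split; ring.
Qed.

Lemma prodN_nat (F : nat -> C) m k :
  \prod_(m <= j < m + k) - F j = (-1) ^+ k * \prod_(m <= j < m + k) F j.
Proof.
elim: k => [|k IH]; first by rewrite addn0 !big_geq // mul1r.
rewrite addnS !big_nat_recr ?leq_addr //= IH exprS; ring.
Qed.

Lemma prod_expi (f : nat -> R) m k :
  \prod_(m <= j < m + k) expi (f j) = expi (\sum_(m <= j < m + k) f j).
Proof.
elim: k => [|k IH]; first by rewrite addn0 !big_geq // expi0.
by rewrite addnS !big_nat_recr ?leq_addr //= IH expiD.
Qed.

Lemma bf_ghz_term k (f g : nat -> 'cV[C]_2) (a b : 'cV[C]_2) (X : nat -> 'M[C]_2) Y :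
  bf (ktens (ktens_from f 1 k) a) (tens_from X 1 k *t Y) (ktens (ktens_from g 1 k) b) =
  (\prod_(1 <= j < k.+2) bf (f j) (X j) (g j)) * bf a Y b.
Proof. by rewrite /ktens bf_tens bf_tens_from add1n. Qed.

Lemma corr n (X : nat -> 'M[C]_2) (Y : 'M[C]_2) :
  expect (ghz R n.+3) (tens_from X 1 n.+1 *t Y) =
  ((Num.sqrt (2 : R))^-1 ^+ 2)%:C *
  ((\prod_(1 <= j < n.+3) X j 0 0) * Y 0 0 + (\prod_(1 <= j < n.+3) X j 0 1) * Y 0 1
 + (\prod_(1 <= j < n.+3) X j 1 0) * Y 1 0 + (\prod_(1 <= j < n.+3) X j 1 1) * Y 1 1).
Proof.
have -> : expect (ghz R n.+3) (tens_from X 1 n.+1 *t Y) = bf (ghz R n.+3) (tens_from X 1 n.+1 *t Y) (ghz R n.+3) by [].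
rewrite /ghz bfZl bfZr !bfDl !bfDr !bf_ghz_term.
have [-> -> -> ->] := bf_ketE Y.
have E : forall x y : 'I_2, forall (u v : 'cV[C]_2),
  (forall j, bf u (X j) v = X j x y) ->
  \prod_(1 <= j < n.+3) bf u (X j) v = \prod_(1 <= j < n.+3) X j x y.
  by move=> x y u v H; apply: eq_bigr => j _; apply: H.
rewrite (E 0 0 (ket0 R) (ket0 R)); last by move=> j; case: (bf_ketE (X j)).
rewrite (E 0 1 (ket0 R) (ket1 R)); last by move=> j; case: (bf_ketE (X j)).
rewrite (E 1 0 (ket1 R) (ket0 R)); last by move=> j; case: (bf_ketE (X j)).
rewrite (E 1 1 (ket1 R) (ket1 R)); last by move=> j; case: (bf_ketE (X j)).
have -> : Num.conj ((Num.sqrt (2:R))^-1)%:C = ((Num.sqrt (2:R))^-1)%:C by exact: conjc_real.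
rewrite expr2 rmorphM; ring.
Qed.

Lemma sq2 : (Num.sqrt (2:R))^-1 ^+ 2 = 2^-1.
Proof. by rewrite exprVn sqr_sqrtr // ler0n. Qed.

Lemma corr2 (a1 a2 a3 b1 b2 b3 : R) :
  expect (psi_plus R) (spin a1 a2 a3 *t spin b1 b2 b3) = (a1 * b1 - a2 * b2 + a3 * b3)%:C.
Proof.
have -> : expect (psi_plus R) (spin a1 a2 a3 *t spin b1 b2 b3) =
  bf (psi_plus R) (spin a1 a2 a3 *t spin b1 b2 b3) (psi_plus R) by [].
rewrite /psi_plus bfZl bfZr !bfDl !bfDr /ktens !bf_tens.
have [-> -> -> ->] := bf_ketE (spin a1 a2 a3).
have [-> -> -> ->] := bf_ketE (spin b1 b2 b3).
have [-> -> -> ->] := spinE a1 a2 a3.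
have [-> -> -> ->] := spinE b1 b2 b3.
have -> : Num.conj ((Num.sqrt (2:R))^-1)%:C = ((Num.sqrt (2:R))^-1)%:C by exact: conjc_real.
have h2 : ((Num.sqrt (2:R))^-1)%:C * ((Num.sqrt (2:R))^-1)%:C = (2^-1 : R)%:C.
  by rewrite -rmorphM -expr2 sq2.
rewrite mulrA h2 /real_complex_def; simpc.
by congr (_ +i* _); field.
Qed.

End S.

Section T.
Variable R : realType.
Local Notation C := R[i].

Lemma expiN_add (t : R) : expi (- t) = (2 * cos t)%:C - expi t.
Proof. rewrite /expi cosN sinN /real_complex_def; simpc; congr (_ +i* _); ring. Qed.

Lemma prodC (f : nat -> R) m k :
  \prod_(m <= j < m + k) (f j)%:C = (\prod_(m <= j < m + k) f j)%:C.
Proof.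
elim: k => [|k IH]; first by rewrite addn0 !big_geq.
by rewrite addnS !big_nat_recr ?leq_addr //= IH rmorphM.
Qed.

Lemma corrN n (al ph : nat -> R) (A P : R) :
  expect (ghz R n.+3) (tens_from (fun j => setting (al j) (ph j)) 1 n.+1 *t setting A P) =
  (2^-1 * ((1 - (-1) ^+ n.+2) * ((\prod_(1 <= j < n.+3) cos (al j)) * cos A))
   + (\prod_(1 <= j < n.+3) sin (al j)) * sin A * cos (\sum_(1 <= j < n.+3) ph j + P))%:C.
Proof.
rewrite corr.
rewrite (eq_bigr (fun j => (cos (al j))%:C)); last by move=> j _; case: (settingE (al j) (ph j)).
rewrite [X in _ + X * _ + _ + _](eq_bigr (fun j => (sin (al j))%:C * expi (- ph j))); last by move=> j _; case: (settingE (al j) (ph j)).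
rewrite [X in _ + X * _ + _](eq_bigr (fun j => (sin (al j))%:C * expi (ph j))); last by move=> j _; case: (settingE (al j) (ph j)).
rewrite [X in _ + X * _](eq_bigr (fun j => - (cos (al j))%:C)); last by move=> j _; case: (settingE (al j) (ph j)).
have [-> -> -> ->] := settingE A P.
rewrite -[n.+3]/(1 + n.+2)%N prodN_nat !big_split /= !prodC !prod_expi sumrN.
have -> : ((-1)^+n.+2 : C) = ((-1)^+n.+2 : R)%:C by rewrite rmorphXn rmorphN1.
rewrite sq2 /expi !cosN !sinN cosD /real_complex_def; simpc.
by congr (_ +i* _); field.
Qed.

End T.

From HB Require Import structures.
From mathcomp Require Import all_boot all_order all_algebra.
From mathcomp Require Import reals trigo.
From mathcomp.real_closed Require Import complex mxtens.
From mathcomp Require Import ring lra.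
Import Order.TTheory GRing.Theory Num.Theory.
Local Open Scope ring_scope.
Set Implicit Arguments.
Unset Strict Implicit.
Section U.
Variable R : realType.

Lemma chsh_key (r p0 q0 c0 p1 q1 c1 x0 y0 z0 x1 y1 z1 e : R) :
  r ^+ 2 = 2 -> (e = 1 \/ e = -1) ->
  r * (2 * r - e * ((p0 * (x0 + x1) + q0 * (y0 + y1) + c0 * (z0 + z1))
                  + (p1 * (x0 - x1) + q1 * (y0 - y1) + c1 * (z0 - z1)))) =
  ((r * p0 - e * (x0 + x1)) ^+ 2 + (r * q0 - e * (y0 + y1)) ^+ 2 + (r * c0 - e * (z0 + z1)) ^+ 2) / 2
  + ((r * p1 - e * (x0 - x1)) ^+ 2 + (r * q1 - e * (y0 - y1)) ^+ 2 + (r * c1 - e * (z0 - z1)) ^+ 2) / 2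
  + (1 - (p0 ^+ 2 + q0 ^+ 2 + c0 ^+ 2)) + (1 - (p1 ^+ 2 + q1 ^+ 2 + c1 ^+ 2))
  + (1 - (x0 ^+ 2 + y0 ^+ 2 + z0 ^+ 2)) + (1 - (x1 ^+ 2 + y1 ^+ 2 + z1 ^+ 2)).
Proof.
move=> hr he.
have he2 : e ^+ 2 = 1 by case: he => ->; rewrite ?expr1n ?sqrrN ?expr1n.
apply/eqP; rewrite -subr_eq0; apply/eqP.
transitivity ((r ^+ 2 - 2) * (2 - (p0 ^+ 2 + q0 ^+ 2 + c0 ^+ 2 + (p1 ^+ 2 + q1 ^+ 2 + c1 ^+ 2)) / 2)
   - (e ^+ 2 - 1) * ((x0 + x1) ^+ 2 + (y0 + y1) ^+ 2 + (z0 + z1) ^+ 2 + (x0 - x1) ^+ 2 + (y0 - y1) ^+ 2 + (z0 - z1) ^+ 2) / 2).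
  by field.
by rewrite hr he2 !subrr !mul0r subr0.
Qed.

Lemma chsh_core (r p0 q0 c0 p1 q1 c1 x0 y0 z0 x1 y1 z1 : R) :
  r ^+ 2 = 2 -> 0 <= r ->
  p0 ^+ 2 + q0 ^+ 2 + c0 ^+ 2 <= 1 -> p1 ^+ 2 + q1 ^+ 2 + c1 ^+ 2 <= 1 ->
  x0 ^+ 2 + y0 ^+ 2 + z0 ^+ 2 <= 1 -> x1 ^+ 2 + y1 ^+ 2 + z1 ^+ 2 <= 1 ->
  let I := (p0 * (x0 + x1) + q0 * (y0 + y1) + c0 * (z0 + z1))
                  + (p1 * (x0 - x1) + q1 * (y0 - y1) + c1 * (z0 - z1)) in
  (- (2 * r) <= I <= 2 * r) /\ (I = 2 * r \/ I = - (2 * r) ->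
   [/\ p0 ^+ 2 + q0 ^+ 2 + c0 ^+ 2 = 1, p1 ^+ 2 + q1 ^+ 2 + c1 ^+ 2 = 1,
       x0 ^+ 2 + y0 ^+ 2 + z0 ^+ 2 = 1 & x1 ^+ 2 + y1 ^+ 2 + z1 ^+ 2 = 1]).
Proof.
move=> hr r0 hu0 hu1 hv0 hv1 I.
have rp : 0 < r.
  rewrite lt_def r0 andbT; apply/eqP => r0'; move: hr; rewrite r0' expr0n /= => /eqP.
  by rewrite eq_sym pnatr_eq0.
have K1 := chsh_key p0 q0 c0 p1 q1 c1 x0 y0 z0 x1 y1 z1 hr (or_introl erefl).
have K2 := chsh_key p0 q0 c0 p1 q1 c1 x0 y0 z0 x1 y1 z1 hr (or_intror erefl).
rewrite -/I in K1 K2.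
move: K1 K2.
set S0 := (_ + _ + _) / 2. set S1 := (_ + _ + _) / 2.
set T0 := (_ + _ + _) / 2. set T1 := (_ + _ + _) / 2.
have hS0 : 0 <= S0 by rewrite divr_ge0 // ?ler0n // !addr_ge0 // sqr_ge0.
have hS1 : 0 <= S1 by rewrite divr_ge0 // ?ler0n // !addr_ge0 // sqr_ge0.
have hT0 : 0 <= T0 by rewrite divr_ge0 // ?ler0n // !addr_ge0 // sqr_ge0.
have hT1 : 0 <= T1 by rewrite divr_ge0 // ?ler0n // !addr_ge0 // sqr_ge0.
move: hu0 hu1 hv0 hv1.
set U0 := p0 ^+ 2 + _ + _. set U1 := p1 ^+ 2 + _ + _.
set V0 := x0 ^+ 2 + _ + _. set V1 := x1 ^+ 2 + _ + _.
move=> hu0 hu1 hv0 hv1 K1 K2.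
have G1 : 0 <= 2 * r - 1 * I.
  by rewrite -(pmulr_rge0 _ rp) K1; lra.
have G2 : 0 <= 2 * r - (-1) * I.
  by rewrite -(pmulr_rge0 _ rp) K2; lra.
split; first by lra.
case=> hI.
  move: K1; rewrite hI mul1r subrr mulr0 => K1; split; lra.
move: K2; rewrite hI mulN1r opprK subrr mulr0 => K2; split; lra.
Qed.

End U.

From HB Require Import structures.
From mathcomp Require Import all_boot all_order all_algebra.
From mathcomp Require Import reals trigo.
From mathcomp.real_closed Require Import complex mxtens.
From mathcomp Require Import ring lra.
Import Order.TTheory GRing.Theory Num.Theory.
Local Open Scope ring_scope.
Local Open Scope complex_scope.
Set Implicit Arguments.
Unset Strict Implicit.
Section V.
Variable R : realType.

Lemma sq_le1_cos (x : R) : cos x ^+ 2 <= 1.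
Proof. have := sin2cos2 x; have := sqr_ge0 (sin x); lra. Qed.
Lemma sq_le1_sin (x : R) : sin x ^+ 2 <= 1.
Proof. have := sin2cos2 x; have := sqr_ge0 (cos x); lra. Qed.

Lemma prod_sq_le1 (f : nat -> R) m k : (forall j, f j ^+ 2 <= 1) ->
  (\prod_(m <= j < k) f j) ^+ 2 <= 1.
Proof.
move=> hf; apply: (big_ind (fun x : R => x ^+ 2 <= 1)); first by rewrite expr1n.
  move=> x y hx hy; rewrite exprMn -[1](mulr1 1).
  by apply: ler_pM => //; apply: sqr_ge0.
by move=> j _; apply: hf.
Qed.

Lemma aux_le1 (a b x y : R) : a ^+ 2 + b ^+ 2 = 1 -> x ^+ 2 <= 1 -> y ^+ 2 <= 1 ->
  (a * x) ^+ 2 + (b * y) ^+ 2 <= 1.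
Proof.
move=> hab hx hy; rewrite !exprMn.
have h1 : a ^+ 2 * x ^+ 2 <= a ^+ 2 by rewrite -[leRHS]mulr1; apply: ler_wpM2l => //; apply: sqr_ge0.
have h2 : b ^+ 2 * y ^+ 2 <= b ^+ 2 by rewrite -[leRHS]mulr1; apply: ler_wpM2l => //; apply: sqr_ge0.
by rewrite -hab; apply: lerD.
Qed.

Lemma D_le1 n (al : nat -> R) :
  (\prod_(1 <= j < n.+2) cos (al j)) ^+ 2 + (\prod_(1 <= j < n.+2) sin (al j)) ^+ 2 <= 1.
Proof.
rewrite [\prod_(1 <= j < n.+2) cos _]big_ltn // [\prod_(1 <= j < n.+2) sin _]big_ltn //; apply: aux_le1.
- by rewrite sin2cos2 addrC subrK.
- by apply: prod_sq_le1 => j; apply: sq_le1_cos.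
- by apply: prod_sq_le1 => j; apply: sq_le1_sin.
Qed.

Lemma normC_real (x : R) : `| x%:C | = `|x|%:C.
Proof.
case: (lerP 0 x) => hx.
  by rewrite !ger0_norm // ler0c.
rewrite !ltr0_norm ?rmorphN //.
by rewrite ltcR.
Qed.

Lemma sq1_ge0 (x : R) : x ^+ 2 = 1 -> 0 <= x -> x = 1.
Proof.
move=> h h0; have : (x - 1) * (x + 1) = 0 by rewrite -subr_sqr h expr1n subrr.
move/eqP; rewrite mulf_eq0 => /orP [/eqP|/eqP]; first by move/eqP; rewrite subr_eq0 => /eqP.
move=> e; have : 0 < x + 1 by rewrite ltr_wpDl. by rewrite e ltxx.
Qed.

End V.

From HB Require Import structures.
From mathcomp Require Import all_boot all_order all_algebra.
From mathcomp Require Import reals trigo.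
From mathcomp.real_closed Require Import complex mxtens.
From mathcomp Require Import ring lra.
Import Order.TTheory GRing.Theory Num.Theory.
Local Open Scope ring_scope.
Local Open Scope complex_scope.
Set Implicit Arguments.
Unset Strict Implicit.
Section W.
Variable R : realType.

Lemma U_eq (s c b : R) : (s * cos b) ^+ 2 + (- (s * sin b)) ^+ 2 + c ^+ 2 = c ^+ 2 + s ^+ 2.
Proof. rewrite sqrrN !exprMn sin2cos2; ring. Qed.
Lemma U_le (s c b : R) : c ^+ 2 + s ^+ 2 <= 1 -> (s * cos b) ^+ 2 + (- (s * sin b)) ^+ 2 + c ^+ 2 <= 1.
Proof. by rewrite U_eq. Qed.
Lemma V_le_even (A P : R) : (sin A * cos P) ^+ 2 + (sin A * sin P) ^+ 2 + cos A ^+ 2 <= 1.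
Proof. have -> : (sin A * cos P) ^+ 2 + (sin A * sin P) ^+ 2 + cos A ^+ 2 = 1.
  by rewrite !exprMn !sin2cos2; ring.
by []. Qed.
Lemma V_odd (A P : R) : (sin A * cos P) ^+ 2 + (sin A * sin P) ^+ 2 + 0 ^+ 2 = sin A ^+ 2.
Proof. rewrite !exprMn [sin P ^+ 2]sin2cos2; ring. Qed.
Lemma V_le_odd (A P : R) : (sin A * cos P) ^+ 2 + (sin A * sin P) ^+ 2 + 0 ^+ 2 <= 1.
Proof. by rewrite V_odd sq_le1_sin. Qed.
Lemma V_odd_eq (A P : R) : 0 <= sin A ->
  (sin A * cos P) ^+ 2 + (sin A * sin P) ^+ 2 + 0 ^+ 2 = 1 -> sin A = 1.
Proof. by rewrite V_odd; move=> h0 h; apply: sq1_ge0. Qed.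

Lemma final_even (r c0 s0 b0 c1 s1 b1 A0 P0 A1 P1 : R) :
  r ^+ 2 = 2 -> 0 <= r -> c0 ^+ 2 + s0 ^+ 2 <= 1 -> c1 ^+ 2 + s1 ^+ 2 <= 1 -> 
  `| (((2^-1 * ((1 - (-1) ^+ true) * (c0 * cos A0)) + s0 * sin A0 * cos (b0 + P0)) + (2^-1 * ((1 - (-1) ^+ true) * (c0 * cos A1)) + s0 * sin A1 * cos (b0 + P1)) + (2^-1 * ((1 - (-1) ^+ true) * (c1 * cos A0)) + s1 * sin A0 * cos (b1 + P0)) - (2^-1 * ((1 - (-1) ^+ true) * (c1 * cos A1)) + s1 * sin A1 * cos (b1 + P1))))%:C | <= (2 * r)%:C /\
  ((((2^-1 * ((1 - (-1) ^+ true) * (c0 * cos A0)) + s0 * sin A0 * cos (b0 + P0)) + (2^-1 * ((1 - (-1) ^+ true) * (c0 * cos A1)) + s0 * sin A1 * cos (b0 + P1)) + (2^-1 * ((1 - (-1) ^+ true) * (c1 * cos A0)) + s1 * sin A0 * cos (b1 + P0)) - (2^-1 * ((1 - (-1) ^+ true) * (c1 * cos A1)) + s1 * sin A1 * cos (b1 + P1))))%:C = (2 * r)%:C \/ (((2^-1 * ((1 - (-1) ^+ true) * (c0 * cos A0)) + s0 * sin A0 * cos (b0 + P0)) + (2^-1 * ((1 - (-1) ^+ true) * (c0 * cos A1)) + s0 * sin A1 * cos (b0 + P1)) + (2^-1 * ((1 - (-1) ^+ true) * (c1 * cos A0)) + s1 * sin A0 * cos (b1 + P0)) - (2^-1 *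 ((1 - (-1) ^+ true) * (c1 * cos A1)) + s1 * sin A1 * cos (b1 + P1))))%:C = - (2 * r)%:C ->
   (((((Num.sqrt (c0 ^+ 2 + s0 ^+ 2))^-1 * s0 * cos b0) * (sin A0 * cos P0) - ((Num.sqrt (c0 ^+ 2 + s0 ^+ 2))^-1 * s0 * sin b0) * (sin A0 * sin P0) + ((Num.sqrt (c0 ^+ 2 + s0 ^+ 2))^-1 * c0) * cos A0) + (((Num.sqrt (c0 ^+ 2 + s0 ^+ 2))^-1 * s0 * cos b0) * (sin A1 * cos P1) - ((Num.sqrt (c0 ^+ 2 + s0 ^+ 2))^-1 * s0 * sin b0) * (sin A1 * sin P1) + ((Num.sqrt (c0 ^+ 2 + s0 ^+ 2))^-1 * c0) * cos A1) + (((Num.sqrt (c1 ^+ 2 + s1 ^+ 2))^-1 * s1 * cos b1) * (sin A0 * cos P0) - ((Num.sqrt (c1 ^+ 2 + s1 ^+ 2))^-1 * s1 * sin b1) * (sin A0 * sin P0) + ((Num.sqrt (c1 ^+ 2 + s1 ^+ 2))^-1 * c1) * cos A0) - (((Num.sqrt (c1 ^+ 2 + s1 ^+ 2))^-1 * s1 * cos b1) * (sin A1 * cos P1) - ((Num.sqrt (c1 ^+ 2 + s1 ^+ 2))^-1 * s1 * sin b1) * (sin A1 * sin P1) + ((Num.sqrt (c1 ^+ 2 + s1 ^+ 2))^-1 * c1) * cos A1)))%:C = (((2^-1 * ((1 - (-1) ^+ true) * (c0 * cos A0)) + s0 * sin A0 * cos (b0 + P0)) + (2^-1 * ((1 - (-1)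 ^+ true) * (c0 * cos A1)) + s0 * sin A1 * cos (b0 + P1)) + (2^-1 * ((1 - (-1) ^+ true) * (c1 * cos A0)) + s1 * sin A0 * cos (b1 + P0)) - (2^-1 * ((1 - (-1) ^+ true) * (c1 * cos A1)) + s1 * sin A1 * cos (b1 + P1))))%:C).
Proof.
move=> hr r0 hD0 hD1 .
have core := @chsh_core R r (s0 * cos b0) (- (s0 * sin b0)) c0 (s1 * cos b1) (- (s1 * sin b1)) c1
  (sin A0 * cos P0) (sin A0 * sin P0) (cos A0) (sin A1 * cos P1) (sin A1 * sin P1) (cos A1) hr r0
  (@U_le s0 c0 b0 hD0) (@U_le s1 c1 b1 hD1) (V_le_even A0 P0) (V_le_even A1 P1).
move: core; set I := (_ + _ + _ + (_ + _ + _)).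
have EIr : ((2^-1 * ((1 - (-1) ^+ true) * (c0 * cos A0)) + s0 * sin A0 * cos (b0 + P0)) + (2^-1 * ((1 - (-1) ^+ true) * (c0 * cos A1)) + s0 * sin A1 * cos (b0 + P1)) + (2^-1 * ((1 - (-1) ^+ true) * (c1 * cos A0)) + s1 * sin A0 * cos (b1 + P0)) - (2^-1 * ((1 - (-1) ^+ true) * (c1 * cos A1)) + s1 * sin A1 * cos (b1 + P1))) = I by rewrite /I !cosD ; field.
rewrite -EIr => -[core1 core2].
split; first by rewrite normC_real lecR ler_norml.
move=> hI.
have hI' : ((2^-1 * ((1 - (-1) ^+ true) * (c0 * cos A0)) + s0 * sin A0 * cos (b0 + P0)) + (2^-1 * ((1 - (-1) ^+ true) * (c0 * cos A1)) + s0 * sin A1 * cos (b0 + P1)) + (2^-1 * ((1 - (-1) ^+ true) * (c1 * cos A0)) + s1 * sin A0 * cos (b1 + P0)) - (2^-1 * ((1 - (-1) ^+ true) * (c1 * cos A1)) + s1 * sin A1 * cos (b1 + P1))) = 2 * r \/ ((2^-1 * ((1 - (-1) ^+ true) * (c0 * cos A0)) + s0 * sin A0 * cos (b0 + P0)) + (2^-1 * ((1 - (-1) ^+ true) * (c0 * cos A1)) + s0 * sin A1 * cos (b0 + P1)) + (2^-1 * ((1 - (-1) ^+ true) * (c1 * cos A0)) + s1 * sin A0 * cos (b1 + P0)) - (2^-1 * ((1 - (-1) ^+ true) * (c1 * cos A1)) + s1 * sin A1 * cos (b1 + P1))) = - (2 * r).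
  by case: hI => h; [left | right]; apply: complexI; rewrite h ?rmorphN.
have [U0 U1 V0 V1] := core2 hI'.
rewrite (U_eq s0 c0 b0) in U0. rewrite (U_eq s1 c1 b1) in U1.
rewrite addrC U0 addrC U1 sqrtr1 invr1.

by apply: congr1; rewrite !mul1r !cosD; field.
Qed.

Lemma final_odd (r c0 s0 b0 c1 s1 b1 A0 P0 A1 P1 : R) :
  r ^+ 2 = 2 -> 0 <= r -> c0 ^+ 2 + s0 ^+ 2 <= 1 -> c1 ^+ 2 + s1 ^+ 2 <= 1 -> 0 <= sin A0 -> 0 <= sin A1 ->
  `| (((2^-1 * ((1 - (-1) ^+ false) * (c0 * cos A0)) + s0 * sin A0 * cos (b0 + P0)) + (2^-1 * ((1 - (-1) ^+ false) * (c0 * cos A1)) + s0 * sin A1 * cos (b0 + P1)) + (2^-1 * ((1 - (-1) ^+ false) * (c1 * cos A0)) + s1 * sin A0 * cos (b1 + P0)) - (2^-1 * ((1 - (-1) ^+ false) * (c1 * cos A1)) + s1 * sin A1 * cos (b1 + P1))))%:C | <= (2 * r)%:C /\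
  ((((2^-1 * ((1 - (-1) ^+ false) * (c0 * cos A0)) + s0 * sin A0 * cos (b0 + P0)) + (2^-1 * ((1 - (-1) ^+ false) * (c0 * cos A1)) + s0 * sin A1 * cos (b0 + P1)) + (2^-1 * ((1 - (-1) ^+ false) * (c1 * cos A0)) + s1 * sin A0 * cos (b1 + P0)) - (2^-1 * ((1 - (-1) ^+ false) * (c1 * cos A1)) + s1 * sin A1 * cos (b1 + P1))))%:C = (2 * r)%:C \/ (((2^-1 * ((1 - (-1) ^+ false) * (c0 * cos A0)) + s0 * sin A0 * cos (b0 + P0)) + (2^-1 * ((1 - (-1) ^+ false) * (c0 * cos A1)) + s0 * sin A1 * cos (b0 + P1)) + (2^-1 * ((1 - (-1) ^+ false) * (c1 * cos A0)) + s1 * sin A0 * cos (b1 + P0)) - (2^-1 * ((1 - (-1) ^+ false) * (c1 * cos A1)) + s1 * sin A1 * cos (b1 + P1))))%:C = - (2 * r)%:C ->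
   (((((Num.sqrt (c0 ^+ 2 + s0 ^+ 2))^-1 * s0 * cos b0) * cos P0 - ((Num.sqrt (c0 ^+ 2 + s0 ^+ 2))^-1 * s0 * sin b0) * sin P0 + ((Num.sqrt (c0 ^+ 2 + s0 ^+ 2))^-1 * c0) * 0) + (((Num.sqrt (c0 ^+ 2 + s0 ^+ 2))^-1 * s0 * cos b0) * cos P1 - ((Num.sqrt (c0 ^+ 2 + s0 ^+ 2))^-1 * s0 * sin b0) * sin P1 + ((Num.sqrt (c0 ^+ 2 + s0 ^+ 2))^-1 * c0) * 0) + (((Num.sqrt (c1 ^+ 2 + s1 ^+ 2))^-1 * s1 * cos b1) * cos P0 - ((Num.sqrt (c1 ^+ 2 + s1 ^+ 2))^-1 * s1 * sin b1) * sin P0 + ((Num.sqrt (c1 ^+ 2 + s1 ^+ 2))^-1 * c1) * 0) - (((Num.sqrt (c1 ^+ 2 + s1 ^+ 2))^-1 * s1 * cos b1) * cos P1 - ((Num.sqrt (c1 ^+ 2 + s1 ^+ 2))^-1 * s1 * sin b1) * sin P1 + ((Num.sqrt (c1 ^+ 2 + s1 ^+ 2))^-1 * c1) * 0)))%:C = (((2^-1 * ((1 - (-1) ^+ false) * (c0 * cos A0)) + s0 * sin A0 * cos (b0 + P0)) + (2^-1 * ((1 - (-1) ^+ false) * (c0 * cos A1)) + s0 * sin A1 * cos (b0 + P1)) + (2^-1 * ((1 - (-1) ^+ false) * (c1 * cos A0)) + s1 * sin A0 * cos (b1 + P0)) - (2^-1 * ((1 - (-1) ^+ false) * (c1 * cos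 A1)) + s1 * sin A1 * cos (b1 + P1))))%:C).
Proof.
move=> hr r0 hD0 hD1 hs0 hs1.
have core := @chsh_core R r (s0 * cos b0) (- (s0 * sin b0)) c0 (s1 * cos b1) (- (s1 * sin b1)) c1
  (sin A0 * cos P0) (sin A0 * sin P0) (0) (sin A1 * cos P1) (sin A1 * sin P1) (0) hr r0
  (@U_le s0 c0 b0 hD0) (@U_le s1 c1 b1 hD1) (V_le_odd A0 P0) (V_le_odd A1 P1).
move: core; set I := (_ + _ + _ + (_ + _ + _)).
have EIr : ((2^-1 * ((1 - (-1) ^+ false) * (c0 * cos A0)) + s0 * sin A0 * cos (b0 + P0)) + (2^-1 * ((1 - (-1) ^+ false) * (c0 * cos A1)) + s0 * sin A1 * cos (b0 + P1)) + (2^-1 * ((1 - (-1) ^+ false) * (c1 * cos A0)) + s1 * sin A0 * cos (b1 + P0)) - (2^-1 * ((1 - (-1) ^+ false) * (c1 * cos A1)) + s1 * sin A1 * cos (b1 + P1))) = I by rewrite /I !cosD ; field.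
rewrite -EIr => -[core1 core2].
split; first by rewrite normC_real lecR ler_norml.
move=> hI.
have hI' : ((2^-1 * ((1 - (-1) ^+ false) * (c0 * cos A0)) + s0 * sin A0 * cos (b0 + P0)) + (2^-1 * ((1 - (-1) ^+ false) * (c0 * cos A1)) + s0 * sin A1 * cos (b0 + P1)) + (2^-1 * ((1 - (-1) ^+ false) * (c1 * cos A0)) + s1 * sin A0 * cos (b1 + P0)) - (2^-1 * ((1 - (-1) ^+ false) * (c1 * cos A1)) + s1 * sin A1 * cos (b1 + P1))) = 2 * r \/ ((2^-1 * ((1 - (-1) ^+ false) * (c0 * cos A0)) + s0 * sin A0 * cos (b0 + P0)) + (2^-1 * ((1 - (-1) ^+ false) * (c0 * cos A1)) + s0 * sin A1 * cos (b0 + P1)) + (2^-1 * ((1 - (-1) ^+ false) * (c1 * cos A0)) + s1 * sin A0 * cos (b1 + P0)) - (2^-1 * ((1 - (-1) ^+ false) * (c1 * cos A1)) + s1 * sin A1 * cos (b1 + P1))) = - (2 * r).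
  by case: hI => h; [left | right]; apply: complexI; rewrite h ?rmorphN.
have [U0 U1 V0 V1] := core2 hI'.
rewrite (U_eq s0 c0 b0) in U0. rewrite (U_eq s1 c1 b1) in U1.
rewrite addrC U0 addrC U1 sqrtr1 invr1.
have s0e := @V_odd_eq A0 P0 hs0 V0. have s1e := @V_odd_eq A1 P1 hs1 V1.
rewrite s0e s1e.
by apply: congr1; rewrite !mul1r !cosD; field.
Qed.

End W.

From HB Require Import structures.
From mathcomp Require Import all_boot all_order all_algebra.
From mathcomp Require Import reals trigo.
From mathcomp.real_closed Require Import complex mxtens.
From mathcomp Require Import ring lra.
Import Order.TTheory GRing.Theory Num.Theory.
Local Open Scope ring_scope.
Local Open Scope complex_scope.

Unset Implicit Arguments.
Set Strict Implicit.

Theorem mainTheorem2 (R : realType) (N : nat) (alpha phi alpha' phi' : nat -> R) :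
  (3 <= N)%N ->
  (forall j : nat, (1 <= j <= N)%N ->
     0 <= alpha j <= pi /\ 0 <= alpha' j <= pi) ->
  `| I_N_CHSH N alpha phi alpha' phi' | <= (2 * Num.sqrt (2 : R))%:C /\
  (ND N alpha alpha' ->
   (I_N_CHSH N alpha phi alpha' phi' = (2 * Num.sqrt (2 : R))%:C \/
    I_N_CHSH N alpha phi alpha' phi' = - (2 * Num.sqrt (2 : R))%:C) ->
   I_2_CHSH N alpha phi alpha' phi' = I_N_CHSH N alpha phi alpha' phi').
Proof.
case: N => [|[|[|n]]] // _ Hr.
have hr : Num.sqrt (2 : R) ^+ 2 = 2 by rewrite sqr_sqrtr // ler0n.
have r0 : 0 <= Num.sqrt (2 : R) by apply: sqrtr_ge0.
have EI : I_N_CHSH n.+3 alpha phi alpha' phi' = ((2^-1 * ((1 - (-1) ^+ n.+2) * ((\prod_(1 <= j < n.+3) cos (alpha j)) * cos (alpha n.+3))) + (\prod_(1 <= j < n.+3) sin (alpha j)) * sin (alpha n.+3) * cos ((\sum_(1 <= j < n.+3) phi j) + phi n.+3)) + (2^-1 * ((1 - (-1) ^+ n.+2) * ((\prod_(1 <= j < n.+3) cos (alpha j)) * cos (alpha' n.+3))) + (\prod_(1 <= j < n.+3) sin (alpha j)) * sin (alpha' n.+3) * cos ((\sum_(1 <= j < n.+3) phi j) + phi' n.+3)) + (2^-1 * ((1 - (-1) ^+ n.+2) * ((\prod_(1 <= j < n.+3) cos (alpha' j)) * cos (alpha n.+3))) + (\prod_(1 <= j < n.+3) sin (alpha' j)) *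 sin (alpha n.+3) * cos ((\sum_(1 <= j < n.+3) phi' j) + phi n.+3)) - (2^-1 * ((1 - (-1) ^+ n.+2) * ((\prod_(1 <= j < n.+3) cos (alpha' j)) * cos (alpha' n.+3))) + (\prod_(1 <= j < n.+3) sin (alpha' j)) * sin (alpha' n.+3) * cos ((\sum_(1 <= j < n.+3) phi' j) + phi' n.+3)))%:C.
  cbv beta zeta delta [I_N_CHSH].
  by rewrite !corrN -!rmorphD -rmorphB.
have oN : odd n.+3 = ~~ odd n by rewrite /= !negbK.
have sg : (-1) ^+ n.+2 = (-1 : R) ^+ (odd n) by rewrite -signr_odd /= negbK.
have sA0 : 0 <= sin (alpha n.+3).
  by apply: sin_ge0_pi; case: (Hr n.+3 (leqnn _)).
have sA1 : 0 <= sin (alpha' n.+3).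
  by apply: sin_ge0_pi; case: (Hr n.+3 (leqnn _)).
have hD0 := D_le1 n.+1 alpha.
have hD1 := D_le1 n.+1 alpha'.
case Hn: (odd n).
- have EI2 : I_2_CHSH n.+3 alpha phi alpha' phi' = ((((Num.sqrt (Dfun n.+3 alpha))^-1 * (\prod_(1 <= j < n.+3) sin (alpha j)) * cos (\sum_(1 <= j < n.+3) phi j)) * (sin (alpha n.+3) * cos (phi n.+3)) - ((Num.sqrt (Dfun n.+3 alpha))^-1 * (\prod_(1 <= j < n.+3) sin (alpha j)) * sin (\sum_(1 <= j < n.+3) phi j)) * (sin (alpha n.+3) * sin (phi n.+3)) + ((Num.sqrt (Dfun n.+3 alpha))^-1 * (\prod_(1 <= j < n.+3) cos (alpha j))) * cos (alpha n.+3)) + (((Num.sqrt (Dfun n.+3 alpha))^-1 * (\prod_(1 <= j < n.+3) sin (alpha j)) * cos (\sum_(1 <= j < n.+3) phi j)) * (sin (alpha' n.+3) * cos (phi' n.+3)) - ((Num.sqrt (Dfun n.+3 alpha))^-1 * (\prod_(1 <= j < n.+3) sin (alpha j)) * sin (\sum_(1 <= j < n.+3) phi j)) * (sin (alpha' n.+3) * sin (phi' n.+3)) + ((Num.sqrt (Dfun n.+3 alpha))^-1 * (\prod_(1 <= j < n.+3) cos (alpha j))) * cos (alpha' n.+3)) + (((Num.sqrt (Dfun n.+3 alpha'))^-1 * (\prod_(1 <= j < n.+3) sin (alpha' j)) * cos (\sum_(1 <= j < n.+3) phi' j)) * (sin (alpha n.+3) * cos (phi n.+3)) - ((Num.sqrt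 (Dfun n.+3 alpha'))^-1 * (\prod_(1 <= j < n.+3) sin (alpha' j)) * sin (\sum_(1 <= j < n.+3) phi' j)) * (sin (alpha n.+3) * sin (phi n.+3)) + ((Num.sqrt (Dfun n.+3 alpha'))^-1 * (\prod_(1 <= j < n.+3) cos (alpha' j))) * cos (alpha n.+3)) - (((Num.sqrt (Dfun n.+3 alpha'))^-1 * (\prod_(1 <= j < n.+3) sin (alpha' j)) * cos (\sum_(1 <= j < n.+3) phi' j)) * (sin (alpha' n.+3) * cos (phi' n.+3)) - ((Num.sqrt (Dfun n.+3 alpha'))^-1 * (\prod_(1 <= j < n.+3) sin (alpha' j)) * sin (\sum_(1 <= j < n.+3) phi' j)) * (sin (alpha' n.+3) * sin (phi' n.+3)) + ((Num.sqrt (Dfun n.+3 alpha'))^-1 * (\prod_(1 <= j < n.+3) cos (alpha' j))) * cos (alpha' n.+3)))%:C.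
    cbv beta zeta delta [I_2_CHSH A_eff B_eff].
    rewrite oN Hn nT; lazy beta iota.
    by rewrite /setting !corr2 -!rmorphD -rmorphB.
  rewrite EI EI2 sg Hn /Dfun.
  have F := @final_even R (Num.sqrt 2) _ _ (\sum_(1 <= j < n.+3) phi j) _ _ (\sum_(1 <= j < n.+3) phi' j)
    (alpha n.+3) (phi n.+3) (alpha' n.+3) (phi' n.+3) hr r0 hD0 hD1.
  by split; [exact: F.1 | move=> _; exact: F.2].
- have EI2 : I_2_CHSH n.+3 alpha phi alpha' phi' = ((((Num.sqrt (Dfun n.+3 alpha))^-1 * (\prod_(1 <= j < n.+3) sin (alpha j)) * cos (\sum_(1 <= j < n.+3) phi j)) * cos (phi n.+3) - ((Num.sqrt (Dfun n.+3 alpha))^-1 * (\prod_(1 <= j < n.+3) sin (alpha j)) * sin (\sum_(1 <= j < n.+3) phi j)) * sin (phi n.+3) + ((Num.sqrt (Dfun n.+3 alpha))^-1 * (\prod_(1 <= j < n.+3) cos (alpha j))) * 0) + (((Num.sqrt (Dfun n.+3 alpha))^-1 * (\prod_(1 <= j < n.+3) sin (alpha j)) * cos (\sum_(1 <= j < n.+3) phi j)) * cos (phi' n.+3) - ((Num.sqrt (Dfun n.+3 alpha))^-1 * (\prod_(1 <= j < n.+3) sin (alpha j)) * sin (\sum_(1 <= j < n.+3) phi j)) * sin (phi' n.+3) + ((Num.sqrt (Dfun n.+3 alpha))^-1 * (\prod_(1 <= j < n.+3) cos (alpha j))) * 0) + (((Num.sqrt (Dfun n.+3 alpha'))^-1 *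 (\prod_(1 <= j < n.+3) sin (alpha' j)) * cos (\sum_(1 <= j < n.+3) phi' j)) * cos (phi n.+3) - ((Num.sqrt (Dfun n.+3 alpha'))^-1 * (\prod_(1 <= j < n.+3) sin (alpha' j)) * sin (\sum_(1 <= j < n.+3) phi' j)) * sin (phi n.+3) + ((Num.sqrt (Dfun n.+3 alpha'))^-1 * (\prod_(1 <= j < n.+3) cos (alpha' j))) * 0) - (((Num.sqrt (Dfun n.+3 alpha'))^-1 * (\prod_(1 <= j < n.+3) sin (alpha' j)) * cos (\sum_(1 <= j < n.+3) phi' j)) * cos (phi' n.+3) - ((Num.sqrt (Dfun n.+3 alpha'))^-1 * (\prod_(1 <= j < n.+3) sin (alpha' j)) * sin (\sum_(1 <= j < n.+3) phi' j)) * sin (phi' n.+3) + ((Num.sqrt (Dfun n.+3 alpha'))^-1 * (\prod_(1 <= j < n.+3) cos (alpha' j))) * 0))%:C.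
    cbv beta zeta delta [I_2_CHSH A_eff B_eff].
    rewrite oN Hn nF; lazy beta iota.
    by rewrite !corr2 -!rmorphD -rmorphB.
  rewrite EI EI2 sg Hn /Dfun.
  have F := @final_odd R (Num.sqrt 2) _ _ (\sum_(1 <= j < n.+3) phi j) _ _ (\sum_(1 <= j < n.+3) phi' j)
    (alpha n.+3) (phi n.+3) (alpha' n.+3) (phi' n.+3) hr r0 hD0 hD1 sA0 sA1.
  by split; [exact: F.1 | move=> _; exact: F.2].
Qed.
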